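(* Let $Y_1=1$ and, for $n\ge2$, $Y_n=\lfloor (n+I)/2\rfloor$ where $I$ is a Bernoulli$(1/2)$ random variable, and let $X_n$ be the number of rounds of the associated leader election process ($X_1=0$, $X_n\overset d=X_{Y_n}+1$ with independent $Y_n$). Then for all $n\ge1$ and all $k\in\mathbb Z$, $\Pr(X_n\le k)=F(k-\log_2 n)$ exactly, where $F(x)=0$ for $x\le-1$, $F(x)=2-2^{-x}$ for $-1\le x\le0$, $F(x)=1$ for $x\ge0$. Moreover $\mathbb E X_n=\log_2 n+\phi(n)$ exactly for $n\ge1$, where $\phi(2^x)=2^{x-\lfloor x\rfloor}-(x-\lfloor x\rfloor)-1$.
   Context: The process: starting with $N_0=n$ players, $N_{k+1}$ has the law of $Y_{N_k}$ given the past, and $X_n=\min\{k:N_k=1\}$. *)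

(* Defs.v *)
From Stdlib Require Import Reals Lra Lia ZArith Arith.
Open Scope R_scope.

(* Law of X_n, computed from the recursion X_1 = 0,
   X_n =d X_{Y_n} + 1 with Y_n = floor((n+I)/2), I ~ Bernoulli(1/2):
   Y_n = floor(n/2) with prob 1/2, floor((n+1)/2) with prob 1/2.
   lawf fuel n j = Pr(X_n = j); fuel >= n suffices (argument halves). *)
Fixpoint lawf (fuel : nat) (n : nat) (j : nat) : R :=
  match fuel with
  | O => if Nat.eqb j 0 then 1 else 0
  | S f =>
      if Nat.leb n 1 then (if Nat.eqb j 0 then 1 else 0)
      else match j with
           | O => 0
           | S j' => / 2 * lawf f (Nat.div2 n) j' + / 2 * lawf f (Nat.div2 (S n)) j'
           end
  end.

Definition law (n j : nat) : R := lawf n n j.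

Definition cdf (n : nat) (k : Z) : R :=
  if Z.ltb k 0 then 0 else sum_f_R0 (fun j => law n j) (Z.to_nat k).

(* E X_n; X_n takes values in {0,...,n} (indeed X_n <= ceil(log2 n)) *)
Definition expect (n : nat) : R := sum_f_R0 (fun j => INR j * law n j) n.

Definition log2 (x : R) : R := ln x / ln 2.

Definition F (x : R) : R :=
  if Rle_dec x (-1) then 0
  else if Rle_dec x 0 then 2 - Rpower 2 (- x)
  else 1.

(* phi(2^x) = 2^{x - floor x} - (x - floor x) - 1, i.e. x = log2 n *)
Definition phi (n : nat) : R :=
  let x := log2 (INR n) in
  let fr := x - IZR (Int_part x) in
  Rpower 2 fr - fr - 1.

(* Main.v *)
Require Import Defs.
From Stdlib Require Import Reals ZArith Lra Lia Arith.
Open Scope R_scope.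

Lemma div2_sum : forall n, (Nat.div2 n + Nat.div2 (S n) = n)%nat.
Proof.
  assert (H : forall n, (Nat.div2 n + Nat.div2 (S n) = n)%nat /\
                        (Nat.div2 (S n) + Nat.div2 (S (S n)) = S n)%nat).
  { induction n as [|n [IH1 IH2]]; [simpl; lia|]. split; [exact IH2|].
    change (Nat.div2 (S (S n))) with (S (Nat.div2 n)).
    change (Nat.div2 (S (S (S n)))) with (S (Nat.div2 (S n))). lia. }
  intro n; apply H.
Qed.

Lemma L (m : nat) : forall f n j, (2^m <= n <= 2^(S m))%nat -> (n <= f)%nat ->
  lawf f n j = (if Nat.eqb j m then 2 - INR n / 2^m else 0)
             + (if Nat.eqb j (S m) then INR n / 2^m - 1 else 0).
Proof.
  induction m as [|m IH]; intros f n j Hn Hf.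
  - simpl in Hn. assert (n = 1 \/ n = 2)%nat as [-> | ->] by lia.
    + destruct f; [lia|]. simpl. destruct j as [|[|j]]; simpl; unfold Rdiv; rewrite ?Rinv_1; lra.
    + destruct f; [lia|]. simpl.
      assert (Hl : forall g j', lawf g 1 j' = if Nat.eqb j' 0 then 1 else 0)
        by (intros g j'; destruct g; reflexivity).
      destruct j as [|[|j]]; simpl; rewrite ?Hl; simpl; unfold Rdiv; rewrite ?Rinv_1; lra.
  - assert (Hpp : (0 < 2^m)%nat) by (apply Nat.neq_0_lt_0, Nat.pow_nonzero; lia).
    destruct f; [simpl in Hn; lia|].
    assert (Hleb : Nat.leb n 1 = false) by (apply Nat.leb_gt; simpl in Hn; lia).
    change (lawf (S f) n j) with (if Nat.leb n 1 then (if Nat.eqb j 0 then 1 else 0) else match j with O => 0 | S j' => /2 * lawf f (Nat.div2 n) j' + /2 * lawf f (Nat.div2 (S n)) j' end).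
    rewrite Hleb.
    pose proof (div2_sum n) as Hs.
    pose proof (Nat.div2_odd n) as Ho.
    assert (Hb : (Nat.b2n (Nat.odd n) <= 1)%nat) by (destruct (Nat.odd n); simpl; lia).
    set (p := (2^m)%nat) in *.
    assert (Hp2 : (2^(S m) = 2 * p)%nat) by (simpl; unfold p; lia).
    assert (Hp3 : (2^(S (S m)) = 2 * (2 * p))%nat) by (simpl; unfold p; lia).
    rewrite Hp2, Hp3 in Hn.
    destruct j as [|j].
    + simpl. lra.
    + rewrite (IH f (Nat.div2 n) j), (IH f (Nat.div2 (S n)) j);
        try (fold p; rewrite ?Hp2; lia).
      simpl Nat.eqb.
      assert (HR : INR n = INR (Nat.div2 n) + INR (Nat.div2 (S n)))
        by (rewrite <- plus_INR, Hs; reflexivity).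
      rewrite HR.
      assert (Hpos : 2 ^ m <> 0) by (apply pow_nonzero; lra).
      simpl pow.
      destruct (Nat.eqb j m); destruct (Nat.eqb j (S m)); field; auto.
Qed.

Lemma sum_ind1 (m : nat) (a : R) : forall K,
  sum_f_R0 (fun j => if Nat.eqb j m then a else 0) K = if Nat.ltb K m then 0 else a.
Proof.
  induction K as [|K IH].
  - simpl. destruct m; simpl; lra.
  - cbn [sum_f_R0]. rewrite IH.
    destruct (Nat.ltb_spec K m); destruct (Nat.ltb_spec (S K) m);
      destruct (Nat.eqb_spec (S K) m); try lia; lra.
Qed.

Lemma sum2 (m : nat) (a b : R) K :
  sum_f_R0 (fun j => (if Nat.eqb j m then a else 0) + (if Nat.eqb j (S m) then b else 0)) K
  = (if Nat.ltb K m then 0 else a) + (if Nat.ltb K (S m) then 0 else b).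
Proof.
  rewrite sum_plus, !sum_ind1. reflexivity.
Qed.

Lemma Int_part_unique x (z : Z) : IZR z <= x < IZR z + 1 -> Int_part x = z.
Proof.
  intros [H1 H2]. destruct (base_Int_part x) as [H3 H4].
  assert (A : (Int_part x < z + 1)%Z) by (apply lt_IZR; rewrite plus_IZR; lra).
  assert (B : (z < Int_part x + 1)%Z) by (apply lt_IZR; rewrite plus_IZR; lra).
  lia.
Qed.

Lemma pow2_INR k : INR (2^k) = 2^k.
Proof. rewrite pow_INR; replace (INR 2) with 2 by (simpl; lra); reflexivity. Qed.

Theorem mainTheorem6 : forall n : nat, (1 <= n)%nat ->
  (forall k : Z, cdf n k = F (IZR k - log2 (INR n))) /\
  expect n = log2 (INR n) + phi n.
Proof.
  intros n Hn.
  destruct (Nat.log2_spec n ltac:(lia)) as [Hm1 Hm2].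
  set (m := Nat.log2 n) in *.
  assert (Hlaw : forall j, law n j =
     (if Nat.eqb j m then 2 - INR n / 2^m else 0)
   + (if Nat.eqb j (S m) then INR n / 2^m - 1 else 0)).
  { intro j. unfold law. apply L; lia. }
  assert (Hnpos : 0 < INR n) by (apply lt_0_INR; lia).
  assert (Hln2 : 0 < ln 2) by (rewrite <- ln_1; apply ln_increasing; lra).
  assert (Hpm : 0 < 2 ^ m) by (apply pow_lt; lra).
  assert (HA : 2 ^ m <= INR n) by (rewrite <- pow2_INR; apply le_INR; exact Hm1).
  assert (HB : INR n < 2 ^ (S m)).
  { replace (2 ^ S m) with (INR (2 ^ S m)) by apply pow2_INR.
    apply lt_INR; exact Hm2. }
  set (x := log2 (INR n)).
  assert (Hx1 : INR m <= x).
  { unfold x, log2. apply Rmult_le_reg_r with (ln 2); auto.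
    unfold Rdiv. rewrite Rmult_assoc, Rinv_l, Rmult_1_r by lra.
    rewrite <- ln_pow by lra. destruct (Rle_lt_or_eq_dec _ _ HA) as [h|h].
    - left. apply ln_increasing; auto.
    - right. rewrite h; reflexivity. }
  assert (Hx2 : x < INR m + 1).
  { unfold x, log2. apply Rmult_lt_reg_r with (ln 2); auto.
    unfold Rdiv. rewrite Rmult_assoc, Rinv_l, Rmult_1_r by lra.
    replace (INR m + 1) with (INR (S m)) by (rewrite S_INR; reflexivity).
    rewrite <- ln_pow by lra. apply ln_increasing; auto. }
  assert (Hpw : Rpower 2 (x - INR m) = INR n / 2 ^ m).
  { unfold Rminus. rewrite Rpower_plus, Rpower_Ropp, Rpower_pow by lra.
    unfold Rpower at 1, x, log2.
    replace (ln (INR n) / ln 2 * ln 2) with (ln (INR n)) by (field; lra).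
    rewrite exp_ln by lra. reflexivity. }
  assert (Hm0 : 0 <= INR m) by apply pos_INR.
  split.
  - intro k. unfold cdf. fold x.
    destruct (Z.ltb_spec k 0) as [Hk|Hk].
    + assert (IZR k <= -1) by (apply IZR_le; lia).
      unfold F. destruct (Rle_dec (IZR k - x) (-1)); [reflexivity | lra].
    + set (K := Z.to_nat k).
      assert (HK : IZR k = INR K) by (unfold K; rewrite INR_IZR_INZ, Z2Nat.id by lia; reflexivity).
      rewrite HK.
      rewrite (sum_eq _ _ _ (fun j _ => Hlaw j)), sum2.
      unfold F.
      destruct (Nat.ltb_spec K m) as [h1|h1].
      * assert (INR (S K) <= INR m) by (apply le_INR; lia). rewrite S_INR in *.
        destruct (Nat.ltb_spec K (S m)); [|lia].
        destruct (Rle_dec (INR K - x) (-1)); [lra | lra].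
      * destruct (Nat.ltb_spec K (S m)) as [h2|h2].
        -- assert (K = m) by lia. subst K. rewrite H.
           destruct (Rle_dec (INR m - x) (-1)); [lra|].
           destruct (Rle_dec (INR m - x) 0); [|lra].
           replace (- (INR m - x)) with (x - INR m) by ring. rewrite Hpw. lra.
        -- assert (INR (S m) <= INR K) by (apply le_INR; lia). rewrite S_INR in *.
           destruct (Rle_dec (INR K - x) (-1)); [lra|].
           destruct (Rle_dec (INR K - x) 0); [lra|]. lra.
  - unfold expect.
    rewrite (sum_eq _ (fun j => (if Nat.eqb j m then INR m * (2 - INR n / 2^m) else 0)
       + (if Nat.eqb j (S m) then INR (S m) * (INR n / 2^m - 1) else 0))).
    2:{ intros j _. rewrite Hlaw.
        destruct (Nat.eqb_spec j m); destruct (Nat.eqb_spec j (S m)); try (exfalso; lia); subst; ring. }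
    rewrite sum2.
    assert (Hmn : (S m <= n)%nat).
    { assert (m < 2 ^ m)%nat by (apply Nat.pow_gt_lin_r; lia). lia. }
    destruct (Nat.ltb_spec n m); [lia|].
    destruct (Nat.ltb_spec n (S m)); [lia|].
    unfold phi. fold x.
    rewrite (Int_part_unique x (Z.of_nat m)) by (rewrite <- INR_IZR_INZ; lra).
    rewrite <- INR_IZR_INZ, Hpw, S_INR. ring.
Qed.
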